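(* Let $Y$ be a statistically compact topological space such that the diagonal $\Delta Y$ is statistically closed in $Y\times Y$, and let $X$ be an open subspace of $Y$ which is statistical sequential, not statistically compact, and such that $Y\setminus X$ consists of exactly one point. Let $f:Y\to X^s$ be the unique bijection which is the identity on $X$. Then $f$ is a statistical homeomorphism.
   Context: For $A\subseteq\mathbb{N}$ let $d_n(A)=|A\cap\{1,\dots,n\}|/n$, $\overline{d}(A)=\limsup_n d_n(A)$, $\underline{d}(A)=\liminf_n d_n(A)$, and $d(A)$ their common value when equal. A sequence in $X$ is a map from an infinite subset $M\subseteq\mathbb{N}$ into $X$, written $(x_n)_{n\in M}$; a subsequence is $(x_n)_{n\in N}$ with $N\subseteq M$ infinite. It is nonthin if $\overline{d}(M)>0$. A nonthin sequence $(x_n)_{n\in M}$ is statistically convergent to $a\in X$ if for every open $U\ni a$, $d(\{n\in M:x_n\notin U\})=0$. The statistical closure $\overline{F}^{ST}$ of $F\subseteq X$ is the set of $x\in X$ such that some nonthin sequence in $F$ is statistically convergent to $x$; $F$ is statistically closed if $\overline{F}^{ST}=F$. For a space $(X,\tau)$, $\tau_{ST}=\{F\subseteq X: X\setminus F$ is statistically closed$\}$, and $X$ is statistical sequential if $\tau=\tau_{ST}$. A topological space is statistically compact if every nonthin sequence in it has a nonthin subsequence that is statistically convergent to some point of the space; a subset is statistically compact if it is so in the subspace topology. For $(X,\tau)$ not statistically compact, the one point statistical compactification is $X^s=X\cup\{\infty^X\}$ ($\infty^X\notin X$) with topology $\tau^X_s=\tau\cup\{X^s\setminus C: C$ closed and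 statistically compact subset of $X\}$. A function is statistically continuous if it maps every nonthin sequence statistically converging to $x$ to a sequence (same index set) statistically converging to the image of $x$; a bijection $f$ is a statistical homeomorphism if $f$ and $f^{-1}$ are both statistically continuous. *)

(* Defs.v *)
From Stdlib Require Import Reals ClassicalEpsilon.
From Coquelicot Require Import Coquelicot.
Open Scope R_scope.

Definition is_topology {T : Type} (tau : (T -> Prop) -> Prop) : Prop :=
  tau (fun _ => True) /\
  (forall F : (T -> Prop) -> Prop, (forall U, F U -> tau U) ->
     tau (fun x => exists U, F U /\ U x)) /\
  (forall U V, tau U -> tau V -> tau (fun x => U x /\ V x)).

Definition indic (A : nat -> Prop) (k : nat) : R :=
  if excluded_middle_informative (A k) then 1 else 0.

Fixpoint cnt (A : nat -> Prop) (n : nat) : R :=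
  match n with
  | O => 0
  | S m => cnt A m + indic A (S m)
  end.

Definition dn (A : nat -> Prop) (n : nat) : R := cnt A n / INR n.

Definition upper_density (A : nat -> Prop) : Rbar := LimSup_seq (dn A).

Definition density_zero (A : nat -> Prop) : Prop := is_lim_seq (dn A) 0.

Definition infinite_nat (M : nat -> Prop) : Prop :=
  forall N : nat, exists n, (N <= n)%nat /\ M n.

(** A sequence (x_n)_{n in M} is encoded by the index set [M] and a function
    [x : nat -> T] (values outside [M] are irrelevant).  It is nonthin if
    M is infinite and has positive upper density. *)
Definition nonthin (M : nat -> Prop) : Prop :=
  infinite_nat M /\ Rbar_lt (Finite 0) (upper_density M).

Definition seq_in {T : Type} (F : T -> Prop) (M : nat -> Prop) (x : nat -> T) : Prop :=
  forall n, M n -> F (x n).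

Definition st_conv {T : Type} (tau : (T -> Prop) -> Prop)
  (M : nat -> Prop) (x : nat -> T) (a : T) : Prop :=
  nonthin M /\
  forall U, tau U -> U a -> density_zero (fun n => M n /\ ~ U (x n)).

Definition st_closure {T : Type} (tau : (T -> Prop) -> Prop) (F : T -> Prop) (a : T) : Prop :=
  exists (M : nat -> Prop) (x : nat -> T),
    nonthin M /\ seq_in F M x /\ st_conv tau M x a.

Definition st_closed {T : Type} (tau : (T -> Prop) -> Prop) (F : T -> Prop) : Prop :=
  forall a, st_closure tau F a <-> F a.

Definition tau_ST {T : Type} (tau : (T -> Prop) -> Prop) (U : T -> Prop) : Prop :=
  st_closed tau (fun x => ~ U x).

Definition st_sequential {T : Type} (tau : (T -> Prop) -> Prop) : Prop :=
  forall U, tau U <-> tau_ST tau U.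

Definition st_compact {T : Type} (tau : (T -> Prop) -> Prop) : Prop :=
  forall (M : nat -> Prop) (x : nat -> T), nonthin M ->
    exists (N : nat -> Prop) (a : T),
      (forall n, N n -> M n) /\ nonthin N /\ st_conv tau N x a.

Definition subspace {T : Type} (tau : (T -> Prop) -> Prop) (C : T -> Prop)
  (V : {x : T | C x} -> Prop) : Prop :=
  exists U, tau U /\ forall z, V z <-> U (proj1_sig z).

Definition st_compact_subset {T : Type} (tau : (T -> Prop) -> Prop) (C : T -> Prop) : Prop :=
  st_compact (subspace tau C).

Definition closed_in {T : Type} (tau : (T -> Prop) -> Prop) (C : T -> Prop) : Prop :=
  tau (fun x => ~ C x).

Definition prod_top {A B : Type} (tA : (A -> Prop) -> Prop) (tB : (B -> Prop) -> Prop)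
  (W : A * B -> Prop) : Prop :=
  forall p, W p -> exists U V, tA U /\ tB V /\ U (fst p) /\ V (snd p) /\
    forall q, U (fst q) -> V (snd q) -> W q.

Definition diagonal (T : Type) (p : T * T) : Prop := fst p = snd p.

(** one point statistical compactification X^s = X ∪ {∞}, carrier [option X]
    with [None] playing the role of ∞^X *)
Definition st_compactification {X : Type} (tau : (X -> Prop) -> Prop)
  (W : option X -> Prop) : Prop :=
  (exists U, tau U /\ ~ W None /\ forall x, W (Some x) <-> U x) \/
  (exists C, closed_in tau C /\ st_compact_subset tau C /\
     W None /\ forall x, W (Some x) <-> ~ C x).

Definition st_continuous {A B : Type} (tA : (A -> Prop) -> Prop) (tB : (B -> Prop) -> Prop)
  (f : A -> B) : Prop :=
  forall (M : nat -> Prop) (x : nat -> A) (a : A),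
    st_conv tA M x a -> st_conv tB M (fun n => f (x n)) (f a).

Definition st_homeomorphism {A B : Type} (tA : (A -> Prop) -> Prop) (tB : (B -> Prop) -> Prop)
  (f : A -> B) : Prop :=
  exists g : B -> A,
    (forall a, g (f a) = a) /\ (forall b, f (g b) = b) /\
    st_continuous tA tB f /\ st_continuous tB tA g.

Definition to_compactification {Y : Type} (Xs : Y -> Prop) (y : Y) : option {y : Y | Xs y} :=
  match excluded_middle_informative (Xs y) with
  | left h => Some (exist _ y h)
  | right _ => None
  end.

(* Main.v *)
Require Import Defs.
From Stdlib Require Import Reals ClassicalEpsilon.
From Coquelicot Require Import Coquelicot.
From Stdlib Require Import Classical Lra Lia ProofIrrelevance.


Lemma indic_b A k : 0 <= indic A k <= 1.
Proof. unfold indic; destruct excluded_middle_informative; lra. Qed.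

Lemma cnt_nonneg A n : 0 <= cnt A n.
Proof. induction n; simpl; [lra|]. pose proof (indic_b A (S n)); lra. Qed.

Lemma cnt_le_n A n : cnt A n <= INR n.
Proof. induction n; [simpl; lra|]. change (cnt A (S n)) with (cnt A n + indic A (S n)). pose proof (indic_b A (S n)). rewrite S_INR; lra. Qed.

Lemma cnt_mono (A B : nat -> Prop) n : (forall k, A k -> B k) -> cnt A n <= cnt B n.
Proof.
  intros H; induction n; simpl; [lra|].
  assert (indic A (S n) <= indic B (S n)).
  { unfold indic; do 2 destruct excluded_middle_informative; try lra. exfalso; auto. }
  lra.
Qed.

Lemma cnt_union (A B : nat -> Prop) n : cnt (fun k => A k \/ B k) n <= cnt A n + cnt B n.
Proof.
  induction n; simpl; [lra|].
  assert (indic (fun k => A k \/ B k) (S n) <= indic A (S n) + indic B (S n)).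
  { unfold indic; repeat destruct excluded_middle_informative; try lra. exfalso; tauto. }
  lra.
Qed.

Lemma inv_INR_nonneg n : 0 <= / INR n.
Proof.
  destruct n. simpl; rewrite Rinv_0; lra.
  apply Rlt_le, Rinv_0_lt_compat, lt_0_INR; lia.
Qed.

Lemma dn_nonneg A n : 0 <= dn A n.
Proof. unfold dn, Rdiv. apply Rmult_le_pos; [apply cnt_nonneg | apply inv_INR_nonneg]. Qed.

Lemma dz_mono (A B : nat -> Prop) : (forall k, A k -> B k) -> density_zero B -> density_zero A.
Proof.
  intros H HB. unfold density_zero.
  apply is_lim_seq_le_le with (u := fun _ => 0) (w := dn B); [|apply is_lim_seq_const|exact HB].
  intros n; split; [apply dn_nonneg|]. unfold dn, Rdiv.
  apply Rmult_le_compat_r; [apply inv_INR_nonneg|]. now apply cnt_mono.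
Qed.

Lemma dz_union (A B : nat -> Prop) : density_zero A -> density_zero B ->
  density_zero (fun k => A k \/ B k).
Proof.
  intros HA HB. unfold density_zero.
  apply is_lim_seq_le_le with (u := fun _ => 0) (w := fun n => dn A n + dn B n);
    [|apply is_lim_seq_const|].
  - intros n; split; [apply dn_nonneg|]. unfold dn, Rdiv. rewrite <- Rmult_plus_distr_r.
    apply Rmult_le_compat_r; [apply inv_INR_nonneg|]. apply cnt_union.
  - replace 0 with (0 + 0) by lra. now apply is_lim_seq_plus'.
Qed.

Lemma finite_dz (A : nat -> Prop) : ~ infinite_nat A -> density_zero A.
Proof.
  intros Hf. unfold infinite_nat in Hf.
  apply not_all_ex_not in Hf. destruct Hf as [N HN].
  assert (Hk : forall k, (N <= k)%nat -> ~ A k) by (intros k Hk HA; apply HN; eauto).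
  assert (Hc : forall n, cnt A n <= INR N).
  { induction n.
    - simpl; apply pos_INR.
    - simpl. destruct (Compare_dec.le_lt_dec N (S n)).
      + unfold indic; destruct excluded_middle_informative as [a|]; [exfalso; eapply Hk; eauto|]. lra.
      + pose proof (cnt_le_n A (S n)). change (cnt A (S n)) with (cnt A n + indic A (S n)) in H.
        assert (INR (S n) <= INR N) by (apply le_INR; lia). lra. }
  unfold density_zero.
  apply is_lim_seq_le_le with (u := fun _ => 0) (w := fun n => INR N * / INR n);
    [|apply is_lim_seq_const|].
  - intros n; split; [apply dn_nonneg|]. unfold dn, Rdiv.
    apply Rmult_le_compat_r; [apply inv_INR_nonneg|auto].
  - replace (Finite 0) with (Rbar_mult (INR N) 0) by (simpl; f_equal; ring).
    apply is_lim_seq_scal_l.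
    replace (Finite 0) with (Rbar_inv p_infty) by reflexivity.
    apply is_lim_seq_inv; [apply is_lim_seq_INR|discriminate].
Qed.

Lemma not_dz_nonthin (A : nat -> Prop) : ~ density_zero A -> nonthin A.
Proof.
  intros H. split.
  - intros Hi. apply NNPP. intros Hn. apply H. apply finite_dz. auto.
  - destruct (Rbar_lt_dec 0 (upper_density A)) as [h|h]; [exact h|].
    exfalso. apply H. apply Rbar_not_lt_le in h.
    assert (h1 : Rbar_le 0 (LimInf_seq (dn A))).
    { rewrite <- (LimInf_seq_const 0). apply LimInf_le. exists O; intros; apply dn_nonneg. }
    pose proof (LimSup_LimInf_seq_le (dn A)) as h2. unfold upper_density in h.
    assert (e1 : LimSup_seq (dn A) = Finite 0) by (apply Rbar_le_antisym; eauto using Rbar_le_trans).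
    assert (e2 : LimInf_seq (dn A) = Finite 0) by (apply Rbar_le_antisym; [rewrite <- e1|]; auto).
    assert (ex : ex_lim_seq (dn A)) by (apply ex_lim_LimSup_LimInf_seq; congruence).
    pose proof (Lim_seq_correct _ ex) as hl.
    pose proof (is_LimSup_seq_unique _ _ (is_lim_LimSup_seq _ _ hl)).
    unfold density_zero. rewrite <- e1, H0. exact hl.
Qed.

Lemma nonthin_not_dz (A : nat -> Prop) : nonthin A -> ~ density_zero A.
Proof.
  intros [_ h] hz. unfold upper_density in h.
  rewrite (is_LimSup_seq_unique _ _ (is_lim_LimSup_seq _ _ hz)) in h. simpl in h. lra.
Qed.

Open Scope R_scope.

Lemma conv_sub {T} (tau : (T -> Prop) -> Prop) M N x a :
  st_conv tau M x a -> (forall n, N n -> M n) -> nonthin N -> st_conv tau N x a.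
Proof.
  intros [_ Hc] HNM hN. split; auto. intros U HU Ua.
  apply dz_mono with (B := fun n => M n /\ ~ U (x n)); [|auto].
  intros n [Nn h]; auto.
Qed.

Lemma tc_some {Y} (Xs : Y -> Prop) y (h : Xs y) : to_compactification Xs y = Some (exist _ y h).
Proof.
  unfold to_compactification. destruct excluded_middle_informative as [h'|h'];
  [f_equal; f_equal; apply proof_irrelevance | contradiction].
Qed.

Lemma tc_none {Y} (Xs : Y -> Prop) y : ~ Xs y -> to_compactification Xs y = None.
Proof.
  unfold to_compactification. destruct excluded_middle_informative; [contradiction|auto].
Qed.

Lemma compl_compact (Y : Type) (tauY : (Y -> Prop) -> Prop) (Xs : Y -> Prop) (p : Y) U :
  st_compact tauY -> (forall y, ~ Xs y -> y = p) -> tauY U -> U p ->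
  st_compact (subspace (subspace tauY Xs) (fun v => ~ U (proj1_sig v))).
Proof.
  intros HY Hp HU Up M y HM.
  destruct (HY M (fun n => proj1_sig (proj1_sig (y n))) HM) as [N [a [NM [nN [_ Hconv]]]]].
  assert (na : ~ U a).
  { intro Ua. apply (nonthin_not_dz _ nN).
    apply dz_mono with (B := fun n => N n /\ ~ U (proj1_sig (proj1_sig (y n)))).
    - intros n Nn; split; auto. exact (proj2_sig (y n)).
    - apply Hconv; auto. }
  assert (ha : Xs a).
  { apply NNPP; intro h. apply na. rewrite (Hp a h). exact Up. }
  exists N, (exist _ (exist _ a ha) na). split; auto. split; auto. split; auto.
  intros V [V1 [[U2 [HU2 HV1]] HV]] Va.
  assert (U2a : U2 a) by (apply (HV1 (exist _ a ha)), (HV (exist _ (exist _ a ha) na)); exact Va).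
  apply dz_mono with (B := fun n => N n /\ ~ U2 (proj1_sig (proj1_sig (y n)))).
  - intros n [Nn h]; split; auto. intro h2; apply h, (HV (y n)), (HV1 (proj1_sig (y n))); exact h2.
  - apply Hconv; auto.
Qed.

Theorem mainTheorem20 (Y : Type) (tauY : (Y -> Prop) -> Prop) (Xs : Y -> Prop) :
  is_topology tauY ->
  st_compact tauY ->
  st_closed (prod_top tauY tauY) (diagonal Y) ->
  tauY Xs ->
  st_sequential (subspace tauY Xs) ->
  ~ st_compact (subspace tauY Xs) ->
  (exists p : Y, ~ Xs p /\ forall y, ~ Xs y -> y = p) ->
  st_homeomorphism tauY (st_compactification (subspace tauY Xs))
    (to_compactification Xs).
Proof.
  intros _ HY HD HXs _ _ [p [np Hp]].
  set (g := fun o : option {y : Y | Xs y} =>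
              match o with Some v => proj1_sig v | None => p end).
  exists g. split; [|split; [|split]].
  - intros a. destruct (classic (Xs a)) as [h|h].
    + rewrite (tc_some Xs a h). reflexivity.
    + rewrite (tc_none Xs a h). simpl. symmetry; auto.
  - intros [[w hw]|]; simpl.
    + apply tc_some.
    + apply tc_none; auto.
  -
    intros M x a [HM Hc]. split; [exact HM|]. intros W HW Wa.
    destruct HW as [[U [HU [HWN HWS]]] | [C [HCcl [HCc [HWN HWS]]]]].
    + destruct (classic (Xs a)) as [ha|ha];
        [| rewrite (tc_none Xs a ha) in Wa; contradiction].
      rewrite (tc_some Xs a ha) in Wa.
      destruct HU as [U0 [HU0 HUU0]].
      assert (U0a : U0 a) by (apply (HUU0 (exist _ a ha)), HWS; exact Wa).
      apply dz_mono with (B := fun n => (M n /\ ~ Xs (x n)) \/ (M n /\ ~ U0 (x n))).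
      * intros n [Mn nW]. destruct (classic (Xs (x n))) as [h|h]; [right|left]; split; auto.
        rewrite (tc_some Xs _ h) in nW. intro h2; apply nW, HWS, HUU0; exact h2.
      * apply dz_union; apply Hc; auto.
    + apply NNPP; intro Hnz.
      set (A := fun n => M n /\ exists h, C (exist _ (x n) h)).
      assert (HA : ~ density_zero A).
      { intro hz; apply Hnz. apply dz_mono with (B := A); [|exact hz].
        intros n [Mn nW]. split; auto. destruct (classic (Xs (x n))) as [h|h].
        - rewrite (tc_some Xs _ h) in nW. exists h. apply NNPP; intro h2; apply nW, HWS; exact h2.
        - rewrite (tc_none Xs _ h) in nW. contradiction. }
      apply not_dz_nonthin in HA.
      destruct (proj1 HA O) as [n0 [_ [_ [h0 hc0]]]].
      set (c0 := exist C (exist _ (x n0) h0) hc0).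
      set (y := fun n => epsilon (inhabits c0)
                  (fun z : {v | C v} => proj1_sig (proj1_sig z) = x n)).
      assert (Hy : forall n, A n -> proj1_sig (proj1_sig (y n)) = x n).
      { intros n [_ [h hc]]. unfold y. apply (epsilon_spec (inhabits c0)
          (fun z : {v | C v} => proj1_sig (proj1_sig z) = x n)).
        exists (exist C (exist _ (x n) h) hc). reflexivity. }
      destruct (HCc A y HA) as [N [c [NA [nN [_ Hconv]]]]].
      set (b := proj1_sig (proj1_sig c)).
      assert (Hb : st_conv tauY N x b).
      { split; auto. intros U HU Ub.
        apply dz_mono with (B := fun n => N n /\ ~ (fun z : {v | C v} => U (proj1_sig (proj1_sig z))) (y n)).
        - intros n [Nn h]; split; auto. rewrite Hy; auto.
        - apply (Hconv (fun z : {v | C v} => U (proj1_sig (proj1_sig z)))); auto. exists (fun w : {y | Xs y} => U (proj1_sig w)). split.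
          + exists U; split; auto. intros; tauto.
          + intros; tauto. }
      assert (Ha : st_conv tauY N x a).
      { apply conv_sub with M; auto. split; auto. intros n Nn; apply NA; auto. }
      assert (Hab : diagonal Y (a, b)).
      { apply (HD (a, b)). exists N, (fun n => (x n, x n)). split; auto. split.
        - intros n _; reflexivity.
        - split; auto. intros W' HW' Wab.
          destruct (HW' _ Wab) as [U [V [HU [HV [Ua [Vb Hr]]]]]].
          apply dz_mono with (A := fun n => N n /\ ~ W' (x n, x n)) (B := fun n => (N n /\ ~ U (x n)) \/ (N n /\ ~ V (x n))).
          + intros n [Nn nW]. destruct (classic (U (x n))) as [h1|h1].
            * right. split; [exact Nn|]. intro h2. apply nW. apply Hr; auto.
            * left. split; auto.
          + apply dz_union; [apply (proj2 Ha) | apply (proj2 Hb)]; auto. }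
      unfold diagonal in Hab; simpl in Hab.
      destruct c as [[b' hb] hcC]. unfold b in Hab; simpl in Hab. subst b'.
      rewrite (tc_some Xs a hb) in Wa. apply HWS in Wa. contradiction.
  -
    intros M z b [HM Hc]. split; [exact HM|]. intros U HU Ub.
    destruct b as [w|].
    + set (W := fun o : option {y : Y | Xs y} =>
                  match o with None => False | Some v => U (proj1_sig v) end).
      apply dz_mono with (B := fun n => M n /\ ~ W (z n)).
      * intros n [Mn h]; split; auto. destruct (z n); simpl in *; auto.
      * apply Hc; [|exact Ub]. left. exists (fun v : {y | Xs y} => U (proj1_sig v)).
        split; [|split].
        -- exists U; split; auto. intros; tauto.
        -- simpl; auto.
        -- intros; simpl; tauto.
    + set (W := fun o : option {y : Y | Xs y} =>
                  match o with None => True | Some v => U (proj1_sig v) end).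
      apply dz_mono with (B := fun n => M n /\ ~ W (z n)).
      * intros n [Mn h]; split; auto. destruct (z n); simpl in *; auto.
      * apply Hc; [|exact I]. right. exists (fun v : {y | Xs y} => ~ U (proj1_sig v)).
        split; [|split; [|split]].
        -- exists U; split; auto. intros; split; [apply NNPP|auto].
        -- apply (compl_compact Y tauY Xs p U HY Hp HU Ub).
        -- exact I.
        -- intros; simpl; split; [auto|apply NNPP].
Qed.
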